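(* Let $B_0,B_1,\dots,B_{p-1}$ be $p$-dimensional subspaces of $\mathcal M_p(\mathbb C)$, mutually orthogonal for the Hilbert–Schmidt inner product, with $B_0$ the subspace of all diagonal matrices. Let $J_c$ be the passage matrix of a cycle $c$ of maximal length. Then $J_cB_l=B_{l+1}$ for all $0\le l\le p-1$ (with $l+1$ taken mod $p$) if and only if $B_l=\mathrm{span}\{|e_{c(k)}\rangle\langle e_{c(k+l)}|:k=0,1,\dots,p-1\}$ for all $0\le l\le p-1$, where indices are taken mod $p$.
   Context: $\{e_j\}$ canonical basis of $\mathbb C^p$; Hilbert–Schmidt inner product $\langle a,b\rangle=\mathrm{tr}(a^*b)$; $J_cB_l=\{J_cx:x\in B_l\}$. A cycle of maximal length is an ordered sequence $c=(c(0),\dots,c(p-1))$ of the $p$ distinct elements of $\{0,\dots,p-1\}$ (up to cyclic permutation), with passage matrix $J_c=\sum_{i=0}^{p-1}|e_{c(i)}\rangle\langle e_{c(i+1)}|$ (indices mod $p$). *)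

(* Defs.v *)
From mathcomp Require Import all_boot all_order all_algebra all_fingroup.
Set Implicit Arguments. Unset Strict Implicit. Unset Printing Implicit Defensive.
Import GRing.Theory Num.Theory.
Local Open Scope ring_scope.

(* Indices in {0,...,p-1} with p = n.+1; addition taken mod p. *)
Definition addmod (n : nat) (k l : nat) : 'I_n.+1 :=
  Ordinal (ltn_pmod (k + l)%N (ltn0Sn n)).

Definition hs_inner (C : numClosedFieldType) (m : nat) (a b : 'M[C]_m) : C :=
  \tr ((map_mx Num.conj a)^T *m b).

(* Passage matrix J_c = sum_i |e_{c(i)}><e_{c(i+1)}| of a cycle of maximal length;
   the cycle (c(0),...,c(p-1)) of the p distinct elements is a permutation c of 'I_p. *)
Definition passage (C : numClosedFieldType) (n : nat) (c : {perm 'I_n.+1}) : 'M[C]_n.+1 :=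
  \sum_(i < n.+1) delta_mx (c i) (c (addmod n i 1)).

Definition left_image_eq (C : numClosedFieldType) (m : nat) (J : 'M[C]_m)
  (B B' : {vspace 'M[C]_m}) : Prop :=
  forall X, X \in B' <-> exists2 Y, Y \in B & X = J *m Y.

Definition cycle_span (C : numClosedFieldType) (n : nat) (c : {perm 'I_n.+1}) (l : 'I_n.+1)
  : {vspace 'M[C]_n.+1} :=
  <<[seq delta_mx (c k) (c (addmod n k l)) | k <- enum 'I_n.+1]>>%VS.

(* Main.v *)
Require Import Defs.
From mathcomp Require Import all_boot all_order all_algebra all_fingroup.
From mathcomp Require Import zify.
Set Implicit Arguments. Unset Strict Implicit. Unset Printing Implicit Defensive.
Import GRing.Theory Num.Theory.
Local Open Scope ring_scope.

Section Aux.
Variables (C : numClosedFieldType) (n : nat) (c : {perm 'I_n.+1}).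

Lemma addmodE (a b : nat) : val (addmod n a b) = ((a + b) %% n.+1)%N.
Proof. by []. Qed.

Lemma addmod_back (k : 'I_n.+1) : addmod n (addmod n k n) 1 = k.
Proof.
apply: val_inj; rewrite /= modnDml -addnA addn1 modnDr modn_small //.
Qed.

Lemma addmod_fwd (k : 'I_n.+1) : addmod n (addmod n k 1) n = k.
Proof.
apply: val_inj; rewrite /= modnDml -addnA add1n modnDr modn_small //.
Qed.

Lemma addmod_inj (i j : 'I_n.+1) : addmod n i 1 = addmod n j 1 -> i = j.
Proof.
move/(congr1 val) => /= /eqP; rewrite eqn_modDr !modn_small // => /eqP h.
exact: val_inj.
Qed.

Lemma addmodA (i l : 'I_n.+1) :
  addmod n (addmod n i 1) l = addmod n i (addmod n l 1).
Proof.
apply: val_inj => /=; rewrite modnDml modnDmr; congr (_ %% _)%N; lia.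
Qed.

Lemma passage_delta (k : 'I_n.+1) (y : 'I_n.+1) :
  passage C c *m delta_mx (c k) y = delta_mx (c (addmod n k n)) y.
Proof.
rewrite /passage mulmx_suml (bigD1 (addmod n k n)) //= addmod_back.
rewrite mul_delta_mx_cond eqxx mulr1n big1 ?addr0 // => i hi.
rewrite mul_delta_mx_cond (inj_eq perm_inj).
case: eqP => [h|]; last by rewrite mulr0n.
by move/eqP: hi; case; apply: addmod_inj; rewrite h addmod_back.
Qed.

Lemma cycle_span_img (l : 'I_n.+1) :
  cycle_span C c (addmod n l 1) = (linfun (mulmx (passage C c)) @: cycle_span C c l)%VS.
Proof.
rewrite /cycle_span limg_span; apply/subv_anti/andP; split.
- apply/span_subvP => X /mapP [k _ ->]; apply: memv_span; apply/mapP.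
  exists (delta_mx (c (addmod n k 1)) (c (addmod n (addmod n k 1) l))).
    by apply/mapP; exists (addmod n k 1); rewrite ?mem_enum.
  by rewrite lfunE /= passage_delta addmod_fwd addmodA.
- apply/span_subvP => X /mapP [Y /mapP [k _ ->] ->]; apply: memv_span; apply/mapP.
  exists (addmod n k n); first by rewrite mem_enum.
  rewrite lfunE /= passage_delta; congr (delta_mx _ (c _)).
  apply: val_inj => /=; rewrite modnDml modnDmr.
  have -> : (k + n + (l + 1) = k + l + n.+1)%N by lia.
  by rewrite modnDr.
Qed.

Lemma cycle_span_left (l : 'I_n.+1) :
  left_image_eq (passage C c) (cycle_span C c l) (cycle_span C c (addmod n l 1)).
Proof.
move=> X; rewrite cycle_span_img; split.
- by case/memv_imgP => Y hY ->; exists Y; rewrite // lfunE.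
- by case=> Y hY ->; apply/memv_imgP; exists Y; rewrite // lfunE.
Qed.

Lemma cycle_span0 (B0 : {vspace 'M[C]_n.+1}) :
  (forall A, A \in B0 <-> is_diag_mx A) -> B0 = cycle_span C c ord0.
Proof.
move=> hB; apply/subv_anti/andP; split; last first.
  apply/span_subvP => X /mapP [k _ ->]; apply/hB.
  have -> : addmod n k 0 = k by apply: val_inj; rewrite /= addn0 modn_small.
  apply/is_diag_mxP => i j hij; rewrite mxE.
  case: (eqVneq i (c k)) => [hi|] //=; case: (eqVneq j (c k)) => [hj|] //=.
  by move: hij; rewrite hi hj eqxx.
apply/subvP => A /hB /is_diag_mxP hA.
rewrite [A]matrix_sum_delta (reindex_inj (@perm_inj _ c)).
apply: memv_suml => k _.
rewrite (bigD1 (c k)) //= big1 ?addr0.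
  apply: memvZ; apply: memv_span; apply/mapP; exists k; first by rewrite mem_enum.
  by congr (delta_mx _ (c _)); apply: val_inj; rewrite /= addn0 modn_small.
move=> j hj; rewrite hA ?scale0r //.
by apply: contraNneq hj => h; apply/eqP/val_inj.
Qed.
End Aux.

Theorem mainTheorem8 (C : numClosedFieldType) (n : nat)
  (B : 'I_n.+1 -> {vspace 'M[C]_n.+1}) (c : {perm 'I_n.+1}) :
  (forall l, \dim (B l) = n.+1) ->
  (forall l l', l != l' -> forall a b, a \in B l -> b \in B l' -> hs_inner a b = 0) ->
  (forall A, A \in B ord0 <-> is_diag_mx A) ->
  (forall l : 'I_n.+1, left_image_eq (passage C c) (B l) (B (addmod n l 1)))
  <-> (forall l, B l = cycle_span C c l).
Proof.
move=> _ _ hdiag; split; last first.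
  by move=> HB l X; rewrite !HB; apply: cycle_span_left.
move=> H.
suff hK : forall k (hk : (k < n.+1)%N), B (Ordinal hk) = cycle_span C c (Ordinal hk).
  by case=> k hk; apply: hK.
elim=> [|k IH] hk.
  have -> : Ordinal hk = ord0 by apply: val_inj.
  exact: cycle_span0.
have hk' : (k < n.+1)%N by apply: ltnW.
have -> : Ordinal hk = addmod n (Ordinal hk') 1.
  by apply: val_inj; rewrite /= addn1 modn_small.
apply/vspaceP => X; apply/idP/idP => hX.
- have := (H (Ordinal hk') X).1 hX; rewrite IH => -[Y hY ->].
  by apply: (proj2 (@cycle_span_left C n c (Ordinal hk') _)); exists Y.
- apply/(H (Ordinal hk') X); rewrite IH.
  exact: (proj1 (@cycle_span_left C n c (Ordinal hk') X)).
Qed.
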